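(* Let $T$ be a left-linear term rewriting system and $\psi$ a trivial proof term for $T$. Then $\psi\approx src(\psi)$.
   Context: Setting. $T=(\Sigma,R)$: $\Sigma$ finite; rules $\mu: l\to r$ with $l$ finite, non-variable, linear, variables of $r$ among those of $l$. Terms are finite or infinite trees; limits w.r.t. $d(t,u)=2^{-k}$ ($k$ least depth of a difference), $d(t,t)=0$. Proof terms are terms over $\Sigma^R\cup\{\cdot/2\}$, where $\Sigma^R$ adds to $\Sigma$ a symbol $\mu$ of arity $n$ per rule $\mu:l[x_1,..,x_n]\to r[x_1,..,x_n]$. Multisteps are closed finite or infinite terms over $\Sigma^R$ ($src$: normal form under $\mu(\vec x)\to l[\vec x]$; $tgt$: normal form, if any, under $\mu(\vec x)\to r[\vec x]$; $mind$: $\omega$ if no rule symbol, else least depth of a rule-symbol occurrence). Proof terms are built from multisteps by $\psi_1\cdot\psi_2$ ($\psi_1$ convergent, $tgt(\psi_1)=src(\psi_2)$), infinite concatenation $\prod_{i<\omega}\psi_i=\psi_0\cdot(\psi_1\cdot\cdots)$ (convergent $\psi_i$, $tgt(\psi_i)=src(\psi_{i+1})$), $f(\psi_1,..,\psi_m)$ for $f\in\Sigma$, and $\mu(\psi_1,..,\psi_n)$; $src$ of a concatenation is that of its first factor, $src(f(\vec\psi))=f(src(\psi_1),..)$, $src(\mu(\vec\psi))=l[src(\psi_1),..]$; $mind$ is $\min$ over factors for concatenations, $1+\min$ for $f$, $0$ for $\mu$. A proof term is trivial iff it contains no rule-symbol occurrence. Permutation equivalence. $\approx_E$ is derivable in the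 equational logic whose axioms are the closed instances (both sides proof terms) of $src(\psi)\cdot\psi=\psi$; $\psi\cdot tgt(\psi)=\psi$ ($\psi$ convergent); $\psi\cdot(\phi\cdot\chi)=(\psi\cdot\phi)\cdot\chi$; $f(\vec\psi)\cdot f(\vec\phi)=f(\psi_1\cdot\phi_1,..)$; $\prod_i f(\psi^1_i,..,\psi^m_i)=f(\prod_i\psi^1_i,..)$; $\mu(\vec\psi)=\mu(src(\psi_1),..)\cdot r[\vec\psi]$; $\mu(\vec\psi)=l[\vec\psi]\cdot\mu(tgt(\psi_1),..)$ (all $\psi_i$ convergent); rules reflexivity, symmetry, transitivity and congruence for all symbols and binary/infinite concatenation. $\approx$ is derivable in this system extended by the limit rule: infer $\psi\approx\phi$ if for each $k<\omega$ there are $\chi_k,\psi'_k,\phi'_k$ with $\psi\approx_E\chi_k\cdot\psi'_k$, $\phi\approx_E\chi_k\cdot\phi'_k$, $mind(\psi'_k)>k$, $mind(\phi'_k)>k$. *)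

(* Defs.v *)
From mathcomp Require Import all_boot.
From Stdlib Require Import ClassicalEpsilon.

Set Implicit Arguments.
Unset Strict Implicit.
Unset Printing Implicit Defensive.

Inductive fterm (S : Type) : Type :=
| Var of nat
| App of S & seq (fterm S).
Arguments Var {S} _.

Fixpoint fwf (S : Type) (ar : S -> nat) (t : fterm S) : bool :=
  match t with
  | Var _ => true
  | App f ts => (size ts == ar f) && all (fwf ar) ts
  end.

Fixpoint fvars (S : Type) (t : fterm S) : seq nat :=
  match t with
  | Var j => [:: j]
  | App _ ts => flatten (map (@fvars S) ts)
  end.

Fixpoint fat (S : Type) (t : fterm S) (p : seq nat) {struct p} : option (S + nat) :=
  match p, t with
  | [::], Var j => Some (inr j)
  | [::], App f _ => Some (inl f)
  | _ :: _, Var _ => None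
  | i :: q, App f ts => if i < size ts then fat (nth (Var 0) ts i) q else None
  end.

(* Term rewriting systems.  A rule mu : l[x_0..x_{n-1}] -> r[x_0..x_{n-1}]   *)
(* has arity n = arR mu; l is non-variable and linear: each x_j (j < n)      *)
(* occurs exactly once in l and no other variable occurs; variables of r are  *)
(* among x_0..x_{n-1}.                                                        *)
Record TRS := {
  Sig : finType;
  arS : Sig -> nat;
  Rul : Type;
  arR : Rul -> nat;
  lhs : Rul -> fterm Sig;
  rhs : Rul -> fterm Sig;
  lhs_wf : forall mu, fwf arS (lhs mu);
  rhs_wf : forall mu, fwf arS (rhs mu);
  lhs_nonvar : forall mu, exists f ts, lhs mu = App f ts;
  lhs_linear : forall mu j, count_mem j (fvars (lhs mu)) = (j < arR mu : nat);
  rhs_vars : forall mu, all (fun j => j < arR mu) (fvars (rhs mu))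
}.

Section ProofTerms.
Variable T : TRS.

(* symbols of proof terms: Sigma, one symbol per rule, and binary concatenation *)
Inductive psym : Type :=
| PF of Sig T
| PR of Rul T
| PDot.

Definition psar (a : psym) : nat :=
  match a with PF f => arS f | PR mu => arR mu | PDot => 2 end.

(* finite or infinite trees, as partial maps from positions to symbols *)
Definition tree := seq nat -> option psym.

Definition wf (t : tree) : Prop :=
  t [::] <> None /\
  forall p i, t (rcons p i) <> None <-> exists a, t p = Some a /\ i < psar a.

Definition root (t : tree) : option psym := t [::].
Definition child (t : tree) (i : nat) : tree := fun q => t (i :: q).

Definition node (a : psym) (ts : nat -> tree) : tree := fun p =>
  match p with
  | [::] => Some a
  | i :: q => if i < psar a then ts i q else None
  end.

Definition dot (psi phi : tree) : tree :=
  node PDot (fun i => if i == 0 then psi else phi).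

(* infinite concatenation  prod_i psi_i = psi_0 . (psi_1 . ( ... )) *)
Fixpoint prod (ps : nat -> tree) (p : seq nat) {struct p} : option psym :=
  match p with
  | [::] => Some PDot
  | i :: q => if i == 0 then ps 0 q
              else if i == 1 then prod (fun n => ps n.+1) q else None
  end.

Fixpoint inst (t : fterm (Sig T)) (sigma : nat -> tree) (p : seq nat) {struct p}
  : option psym :=
  match t with
  | Var j => sigma j p
  | App f ts =>
      match p with
      | [::] => Some (PF f)
      | i :: q => if i < size ts then inst (nth (Var 0) ts i) sigma q else None
      end
  end.

(* n-th node of the right spine *)
Definition rsp (n : nat) (t : tree) : tree := iter n (fun u => child u 1) t.

(* src: symbol a occurs at position p of src(t) *)
Inductive spos : tree -> seq nat -> psym -> Prop :=
| sp_f t f : root t = Some (PF f) -> spos t [::] (PF f)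
| sp_fc t f i q a : root t = Some (PF f) -> i < arS f ->
    spos (child t i) q a -> spos t (i :: q) a
| sp_r t mu p f : root t = Some (PR mu) -> fat (lhs mu) p = Some (inl f) ->
    spos t p (PF f)
| sp_rv t mu p1 j q a : root t = Some (PR mu) -> fat (lhs mu) p1 = Some (inr j) ->
    spos (child t j) q a -> spos t (p1 ++ q) a
| sp_dot t p a : root t = Some PDot -> spos (child t 0) p a -> spos t p a.

(* tgt: symbol a occurs at position p of tgt(t); for an infinite
   concatenation tgt is the (pointwise = metric) limit of the targets *)
Inductive tpos : tree -> seq nat -> psym -> Prop :=
| tp_f t f : root t = Some (PF f) -> tpos t [::] (PF f)
| tp_fc t f i q a : root t = Some (PF f) -> i < arS f ->
    tpos (child t i) q a -> tpos t (i :: q) a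
| tp_r t mu p f : root t = Some (PR mu) -> fat (rhs mu) p = Some (inl f) ->
    tpos t p (PF f)
| tp_rv t mu p1 j q a : root t = Some (PR mu) -> fat (rhs mu) p1 = Some (inr j) ->
    tpos (child t j) q a -> tpos t (p1 ++ q) a
| tp_dot t p a : root t = Some PDot -> tpos (child t 1) p a -> tpos t p a
| tp_lim t p a : (forall n, root (rsp n t) = Some PDot) ->
    (exists N, forall n, N <= n -> tpos (child (rsp n t) 0) p a) -> tpos t p a.

Definition of_rel (R : seq nat -> psym -> Prop) : tree := fun p =>
  epsilon (inhabits None) (fun o : option psym => forall a, o = Some a <-> R p a).

Definition src (t : tree) : tree := of_rel (spos t).
Definition tgt (t : tree) : tree := of_rel (tpos t).

Definition multistep (t : tree) : Prop := wf t /\ forall p, t p <> Some PDot.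

Definition sigdepth (t : tree) (p : seq nat) : nat :=
  count (fun i => if t (take i p) is Some (PF _) then true else false)
        (iota 0 (size p)).

Definition mind_gt (t : tree) (k : nat) : Prop :=
  forall p mu, t p = Some (PR mu) -> k < sigdepth t p.

Definition trivial (t : tree) : Prop := forall p mu, t p <> Some (PR mu).

Inductive conv : tree -> Prop :=
| cv_ms m : multistep m -> wf (tgt m) -> conv m
| cv_dot psi phi : conv psi -> conv phi -> conv (dot psi phi)
| cv_prod ps : (forall i, conv (ps i)) ->
    (forall k, exists N, forall n, N <= n -> mind_gt (ps n) k) -> conv (prod ps)
| cv_f f ps : (forall i, i < arS f -> conv (ps i)) -> conv (node (PF f) ps)
| cv_r mu ps : (forall i, i < arR mu -> conv (ps i)) -> conv (node (PR mu) ps).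

Inductive PT : tree -> Prop :=
| PT_ms m : multistep m -> PT m
| PT_dot psi phi : PT psi -> PT phi -> conv psi -> tgt psi = src phi ->
    PT (dot psi phi)
| PT_prod ps : (forall i, PT (ps i)) -> (forall i, conv (ps i)) ->
    (forall i, tgt (ps i) = src (ps i.+1)) -> PT (prod ps)
| PT_f f ps : (forall i, i < arS f -> PT (ps i)) -> PT (node (PF f) ps)
| PT_r mu ps : (forall i, i < arR mu -> PT (ps i)) -> PT (node (PR mu) ps).

(* Permutation equivalence.  eqlog false = derivability in the equational
   logic (~E); eqlog true = derivability with the limit rule added (~). *)
Inductive eqlog : bool -> tree -> tree -> Prop :=
| ax_src b psi : PT psi -> PT (dot (src psi) psi) ->
    eqlog b (dot (src psi) psi) psi
| ax_tgt b psi : PT psi -> conv psi -> PT (dot psi (tgt psi)) ->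
    eqlog b (dot psi (tgt psi)) psi
| ax_assoc b psi phi chi : PT (dot psi (dot phi chi)) -> PT (dot (dot psi phi) chi) ->
    eqlog b (dot psi (dot phi chi)) (dot (dot psi phi) chi)
| ax_fdot b f ps qs : PT (dot (node (PF f) ps) (node (PF f) qs)) ->
    PT (node (PF f) (fun i => dot (ps i) (qs i))) ->
    eqlog b (dot (node (PF f) ps) (node (PF f) qs)) (node (PF f) (fun i => dot (ps i) (qs i)))
| ax_fprod b f (ps : nat -> nat -> tree) :
    PT (prod (fun i => node (PF f) (ps i))) ->
    PT (node (PF f) (fun j => prod (fun i => ps i j))) ->
    eqlog b (prod (fun i => node (PF f) (ps i))) (node (PF f) (fun j => prod (fun i => ps i j)))
| ax_out b mu ps : PT (node (PR mu) ps) ->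
    PT (dot (node (PR mu) (fun j => src (ps j))) (inst (rhs mu) ps)) ->
    eqlog b (node (PR mu) ps) (dot (node (PR mu) (fun j => src (ps j))) (inst (rhs mu) ps))
| ax_in b mu ps : PT (node (PR mu) ps) -> (forall j, j < arR mu -> conv (ps j)) ->
    PT (dot (inst (lhs mu) ps) (node (PR mu) (fun j => tgt (ps j)))) ->
    eqlog b (node (PR mu) ps) (dot (inst (lhs mu) ps) (node (PR mu) (fun j => tgt (ps j))))
| eq_refl b psi : PT psi -> eqlog b psi psi
| eq_sym b psi phi : eqlog b psi phi -> eqlog b phi psi
| eq_trans b psi phi chi : eqlog b psi phi -> eqlog b phi chi -> eqlog b psi chi
| cong_f b f ps qs : (forall i, i < arS f -> eqlog b (ps i) (qs i)) ->
    PT (node (PF f) ps) -> PT (node (PF f) qs) ->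
    eqlog b (node (PF f) ps) (node (PF f) qs)
| cong_r b mu ps qs : (forall i, i < arR mu -> eqlog b (ps i) (qs i)) ->
    PT (node (PR mu) ps) -> PT (node (PR mu) qs) ->
    eqlog b (node (PR mu) ps) (node (PR mu) qs)
| cong_dot b psi1 psi2 phi1 phi2 : eqlog b psi1 phi1 -> eqlog b psi2 phi2 ->
    PT (dot psi1 psi2) -> PT (dot phi1 phi2) ->
    eqlog b (dot psi1 psi2) (dot phi1 phi2)
| cong_prod b ps qs : (forall i, eqlog b (ps i) (qs i)) ->
    PT (prod ps) -> PT (prod qs) -> eqlog b (prod ps) (prod qs)
| limit_rule psi phi :
    (forall k, exists chi psi' phi',
        eqlog false psi (dot chi psi') /\ eqlog false phi (dot chi phi') /\
        mind_gt psi' k /\ mind_gt phi' k) ->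
    eqlog true psi phi.

Definition permeqE := eqlog false.
Definition permeq := eqlog true.

End ProofTerms.

(* Main.v *)
Require Import Defs.
From Stdlib Require Import ClassicalEpsilon Classical FunctionalExtensionality.
From mathcomp Require Import all_boot.
Require Import Defs.

Set Implicit Arguments.
Unset Strict Implicit.
Unset Printing Implicit Defensive.

Section Aux.
Variable T : TRS.
Implicit Types (t psi phi : tree T).

Definition onlyF t := forall p a, t p = Some a -> exists f, a = @PF T f.

Definition Pre t := forall p i q, t (rcons p i ++ q) <> None ->
  exists f, t p = Some (@PF T f) /\ i < arS f.

Lemma spos_inv t p a : spos t p a ->
  (exists f, root t = Some (PF f) /\ p = [::] /\ a = PF f) \/
  (exists f i q, root t = Some (PF f) /\ i < arS f /\ p = i :: q /\ spos (child t i) q a) \/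
  (exists mu, root t = Some (PR mu)) \/
  (root t = Some (@PDot T) /\ spos (child t 0) p a).
Proof.
case=> {t p a}.
- move=> t f H; left; by exists f.
- move=> t f i q a H1 H2 H3; right; left; by exists f, i, q.
- move=> t mu p f H _; right; right; left; by exists mu.
- move=> t mu p1 j q a H _ _; right; right; left; by exists mu.
- move=> t p a H1 H2; by right; right; right.
Qed.

Lemma spos_PF t p a : spos t p a -> exists f, a = PF f.
Proof. elim=> //; by eauto. Qed.

Lemma triv_child t i : trivial t -> trivial (child t i).
Proof. move=> Ht p mu; exact (Ht (i :: p) mu). Qed.

Lemma spos_fun t p a b : trivial t -> spos t p a -> spos t p b -> a = b.
Proof.
intros Ht H; revert b Ht; induction H; intros b Ht H2; apply spos_inv in H2.
- destruct H2 as [[f' [Hr [_ ->]]] | [[f' [i [q [Hr [_ [Hp _]]]]]] | [[mu Hr] | [Hr _]]]];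
    try congruence; try discriminate.
- destruct H2 as [[f' [Hr [Hp _]]] | [[f' [i' [q' [Hr [_ [Hp H']]]]]] | [[mu Hr] | [Hr _]]]];
    try congruence; try discriminate.
  injection Hp as -> ->. apply IHspos; [apply triv_child|]; assumption.
- exfalso; exact (Ht [::] mu H).
- exfalso; exact (Ht [::] mu H).
- destruct H2 as [[f' [Hr [Hp _]]] | [[f' [i' [q' [Hr [_ [Hp H']]]]]] | [[mu Hr] | [Hr H']]]];
    try congruence; try discriminate.
  apply IHspos; [apply triv_child|]; assumption.
Qed.

Lemma of_relP (R : seq nat -> psym T -> Prop) p :
  (forall a b, R p a -> R p b -> a = b) ->
  forall a, of_rel R p = Some a <-> R p a.
Proof.
move=> Hf. unfold of_rel.
apply (epsilon_spec (inhabits None) (fun o => forall a, o = Some a <-> R p a)).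
destruct (classic (exists a, R p a)) as [[a Ha]|Hn].
- exists (Some a) => b; split; [by case=> <- | by move=> Hb; rewrite (Hf _ _ Ha Hb)].
- exists None => b; split; [discriminate | move=> Hb; exfalso; apply: Hn; by exists b].
Qed.

Lemma of_rel_eq (R : seq nat -> psym T -> Prop) t :
  (forall p a, R p a <-> t p = Some a) -> of_rel R = t.
Proof.
move=> H; apply: functional_extensionality => p.
have Hf : forall a b, R p a -> R p b -> a = b.
  move=> a b /H Ha /H Hb; congruence.
have HP := of_relP Hf.
destruct (of_rel R p) eqn:E1.
- symmetry; by apply/H/HP.
- destruct (t p) eqn:E2 => //.
  have : None = Some p0 by apply/HP/H.
  congruence.
Qed.

Lemma src_spec t : trivial t -> forall p a, src t p = Some a <-> spos t p a.
Proof. move=> Ht p; apply: of_relP => a b; exact: spos_fun. Qed.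

Lemma onlyF_child t i : onlyF t -> onlyF (child t i).
Proof. move=> H p a; exact (H (i :: p) a). Qed.

Lemma Pre_child t j : Pre t -> Pre (child t j).
Proof. move=> H p i q; exact (H (j :: p) i q). Qed.

Lemma spos_onlyF t p a : onlyF t -> spos t p a -> t p = Some a.
Proof.
move=> Ho H; elim: H Ho => {t p a}.
- by move=> t f H _.
- move=> t f i q a _ _ _ IH Ho; apply: IH; exact: onlyF_child.
- move=> t mu p f H _ Ho; have [g] := Ho _ _ H; discriminate.
- move=> t mu p1 j q a H _ _ _ Ho; have [g] := Ho _ _ H; discriminate.
- move=> t p a H _ _ Ho; have [g] := Ho _ _ H; discriminate.
Qed.

Lemma tpos_onlyF t p a : onlyF t -> tpos t p a -> t p = Some a.
Proof.
move=> Ho H; elim: H Ho => {t p a}.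
- by move=> t f H _.
- move=> t f i q a _ _ _ IH Ho; apply: IH; exact: onlyF_child.
- move=> t mu p f H _ Ho; have [g] := Ho _ _ H; discriminate.
- move=> t mu p1 j q a H _ _ _ Ho; have [g] := Ho _ _ H; discriminate.
- move=> t p a H _ _ Ho; have [g] := Ho _ _ H; discriminate.
- move=> t p a H _ Ho; have H0 := H 0; have [g] := Ho _ _ H0; discriminate.
Qed.

Lemma pos_spos p : forall t a, onlyF t -> Pre t -> t p = Some a -> spos t p a.
Proof.
elim: p => [|i q IH] t a Ho Hp E.
- have [f Ef] := Ho _ _ E; subst a; apply: sp_f; exact E.
- have [f [Hr Hi]] : exists f, t [::] = Some (PF f) /\ i < arS f.
    apply: (Hp [::] i q) => /=; by rewrite E.
  apply: (sp_fc Hr Hi); apply: IH; [exact: onlyF_child|exact: Pre_child|exact E].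
Qed.

Lemma pos_tpos p : forall t a, onlyF t -> Pre t -> t p = Some a -> tpos t p a.
Proof.
elim: p => [|i q IH] t a Ho Hp E.
- have [f Ef] := Ho _ _ E; subst a; apply: tp_f; exact E.
- have [f [Hr Hi]] : exists f, t [::] = Some (PF f) /\ i < arS f.
    apply: (Hp [::] i q) => /=; by rewrite E.
  apply: (tp_fc Hr Hi); apply: IH; [exact: onlyF_child|exact: Pre_child|exact E].
Qed.

Lemma wf_prefix t p q : wf t -> t (p ++ q) <> None -> t p <> None.
Proof.
move=> Hw; elim/last_ind: q => [|q x IH]; first by rewrite cats0.
rewrite -rcons_cat => H; apply: IH.
have [a [Ha _]] := proj1 (proj2 Hw _ _) H; congruence.
Qed.

Lemma wf_Pre t : wf t -> onlyF t -> Pre t.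
Proof.
move=> Hw Ho p i q H.
have H1 := wf_prefix Hw H.
have [a [Ha Hi]] := proj1 (proj2 Hw _ _) H1.
have [f Ef] := Ho _ _ Ha; subst a; by exists f.
Qed.

Lemma child_dot0 psi phi : child (dot psi phi) 0 = psi.
Proof. by apply: functional_extensionality. Qed.

Lemma child_prod0 (ps : nat -> tree T) : child (prod ps) 0 = ps 0.
Proof. by apply: functional_extensionality. Qed.

Lemma child_node (a : psym T) ps i : i < psar a -> child (node a ps) i = ps i.
Proof. move=> Hi; apply: functional_extensionality => q; by rewrite /child /node Hi. Qed.

Lemma spos_dotE t p a : root t = Some (@PDot T) ->
  (spos t p a <-> spos (child t 0) p a).
Proof.
move=> Hr; split; last exact: sp_dot.
move/spos_inv.
move=> [[f' [Hr' _]] | [[f' [i' [q' [Hr' _]]]] | [[mu Hr'] | [_ H']]]]; try congruence.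
Qed.

Lemma spos_node0 (f : Sig T) ps a : spos (node (PF f) ps) [::] a <-> a = PF f.
Proof.
split; last by move=> ->; exact: sp_f.
move/spos_inv.
move=> [[f' [Hr' [_ ->]]] | [[f' [i' [q' [Hr' [_ [Hp _]]]]]] | [[mu Hr'] | [Hr' H']]]];
  try discriminate; rewrite /root /= in Hr'; congruence.
Qed.

Lemma spos_nodeS (f : Sig T) ps i q a :
  spos (node (PF f) ps) (i :: q) a <-> i < arS f /\ spos (ps i) q a.
Proof.
split.
- move/spos_inv.
  move=> [[f' [Hr' [Hp _]]] | [[f' [i' [q' [Hr' [Hi [Hp H']]]]]] | [[mu Hr'] | [Hr' H']]]];
    try discriminate; rewrite /root /= in Hr'; try congruence.
  injection Hp => Eq Ei; subst i' q'.
  have Ef : f' = f by congruence.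
  subst f'; split => //.
  by rewrite child_node in H'.
- move=> [Hi H]; apply: (sp_fc (f := f)) => //.
  by rewrite child_node.
Qed.

Definition Good psi := (exists a, spos psi [::] a) /\
  forall p i, (exists b, spos psi (rcons p i) b) <-> exists f, spos psi p (PF f) /\ i < arS f.

Lemma PT_good psi : PT psi -> trivial psi -> Good psi.
Proof.
elim=> {psi}.
- move=> m [Hw Hnd] Ht.
  have Ho : onlyF m.
    move=> p [f|mu|] E; [by exists f | exfalso; exact: (Ht p mu) | exfalso; exact: (Hnd p)].
  have Hp := wf_Pre Hw Ho.
  have E : forall p a, spos m p a <-> m p = Some a.
    move=> p a; split; [exact: spos_onlyF | exact: pos_spos].
  split.
  + case E0: (m [::]) => [a|]; last by have := proj1 Hw; rewrite E0.
    by exists a; apply/E.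
  + move=> p i; split.
    * move=> [b /E Hb].
      have [a [Ha Hi]] : exists a, m p = Some a /\ i < psar a.
        by apply/(proj2 Hw); rewrite Hb.
      have [f Ef] := Ho _ _ Ha; subst a.
      by exists f; split => //; apply/E.
    * move=> [f [/E Hf Hi]].
      have : m (rcons p i) <> None by apply/(proj2 Hw); exists (PF f).
      case E1: (m (rcons p i)) => [b|] // _; exists b; exact/E.
- move=> psi phi _ IH _ _ _ _ Ht.
  have Ht' : trivial psi by move=> p mu; exact (Ht (0 :: p) mu).
  have [[a Ha] IH2] := IH Ht'.
  have E : forall p a, spos (dot psi phi) p a <-> spos psi p a.
    move=> p b; rewrite spos_dotE // child_dot0; done.
  split; first by exists a; apply/E.
  move=> p i; split.
  + move=> [b /E Hb]; have [f [Hf Hi]] := proj1 (IH2 p i) (ex_intro _ b Hb).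
    by exists f; split => //; apply/E.
  + move=> [f [/E Hf Hi]]; have [b Hb] := proj2 (IH2 p i) (ex_intro _ f (conj Hf Hi)).
    by exists b; apply/E.
- move=> ps _ IH _ _ Ht.
  have Ht' : trivial (ps 0) by move=> p mu; exact (Ht (0 :: p) mu).
  have [[a Ha] IH2] := IH 0 Ht'.
  have E : forall p a, spos (prod ps) p a <-> spos (ps 0) p a.
    move=> p b; rewrite spos_dotE // child_prod0; done.
  split; first by exists a; apply/E.
  move=> p i; split.
  + move=> [b /E Hb]; have [f [Hf Hi]] := proj1 (IH2 p i) (ex_intro _ b Hb).
    by exists f; split => //; apply/E.
  + move=> [f [/E Hf Hi]]; have [b Hb] := proj2 (IH2 p i) (ex_intro _ f (conj Hf Hi)).
    by exists b; apply/E.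
- move=> f ps _ IH Ht.
  have Hti : forall i, i < arS f -> trivial (ps i).
    move=> i Hi p mu; have := Ht (i :: p) mu; by rewrite /node /= Hi.
  split; first by exists (PF f); apply/spos_node0.
  move=> [|j p] i /=.
  + split.
    * move=> [b /spos_nodeS [Hi _]]; exists f; split => //; exact/spos_node0.
    * move=> [g [/spos_node0 [->] Hi]].
      have [[b Hb] _] := IH i Hi (Hti i Hi).
      by exists b; apply/spos_nodeS.
  + split.
    * move=> [b /spos_nodeS [Hj Hb]].
      have [g [Hg Hi]] := proj1 (proj2 (IH j Hj (Hti j Hj)) p i) (ex_intro _ b Hb).
      by exists g; split => //; apply/spos_nodeS.
    * move=> [g [/spos_nodeS [Hj Hg] Hi]].
      have [b Hb] := proj2 (proj2 (IH j Hj (Hti j Hj)) p i) (ex_intro _ g (conj Hg Hi)).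
      by exists b; apply/spos_nodeS.
- move=> mu ps _ _ Ht; exfalso; exact (Ht [::] mu erefl).
Qed.

End Aux.

Theorem mainTheorem10 (T : TRS) (psi : tree T) :
  PT psi -> trivial psi -> permeq psi (src psi).
Proof.
move=> HPT Ht.
have [[a0 Ha0] HG] := PT_good HPT Ht.
have HS : forall p a, spos psi p a <-> src psi p = Some a.
  move=> p a; symmetry; exact: src_spec.
set S := src psi in HS *.
have Ho : onlyF S.
  move=> p a /HS H; exact: spos_PF H.
have HtS : trivial S.
  move=> p mu E; have [f] := Ho _ _ E; discriminate.
have Hw : wf S.
  split.
  - have := proj1 (HS _ _) Ha0; congruence.
  - move=> p i; split.
    + case E: (S (rcons p i)) => [b|] // _.
      have [f [Hf Hi]] := proj1 (HG p i) (ex_intro _ b (proj2 (HS _ _) E)).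
      by exists (PF f); split => //; apply/HS.
    + move=> [a [Ha Hi]].
      have [f Ef] := Ho _ _ Ha; subst a.
      have [b Hb] := proj2 (HG p i) (ex_intro _ f (conj (proj2 (HS _ _) Ha) Hi)).
      by rewrite (proj1 (HS _ _) Hb).
have Hpre := wf_Pre Hw Ho.
have Htgt : tgt S = S.
  apply: of_rel_eq => p a; split; [exact: tpos_onlyF | exact: pos_tpos].
have Hsrc : src S = S.
  apply: of_rel_eq => p a; split; [exact: spos_onlyF | exact: pos_spos].
have Hms : multistep S.
  split => // p E; have [f] := Ho _ _ E; discriminate.
have Hconv : conv S by apply: cv_ms => //; rewrite Htgt.
have HPS : PT S by exact: PT_ms.
apply: limit_rule => k.
exists S, psi, S; split; [|split; [|split]].
- apply: eq_sym; apply: ax_src => //.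
  apply: PT_dot => //.
- have H : PT (dot S (tgt S)).
    rewrite Htgt; apply: PT_dot => //; by rewrite Htgt Hsrc.
  have := ax_tgt false HPS Hconv H; rewrite Htgt => H'; exact: eq_sym.
- move=> p mu E; exfalso; exact: (Ht p mu E).
- move=> p mu E; exfalso; exact: (HtS p mu E).
Qed.
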